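(* Let $\mathcal{A}$ be a finite set of responses with $|\mathcal{A}|\ge 2$. For each $i\in\mathcal{A}$ let $p_i>0$ with $\sum_{i\in\mathcal{A}}p_i=1$, and let $r^*_i\in\mathbb{R}$. Define $$\alpha_i=\sum_{j\neq i}\frac{p_i}{p_i+p_j},\qquad \beta_i=\sum_{j\neq i}\frac{e^{r^*_i}}{e^{r^*_i}+e^{r^*_j}},\qquad w_i=-(\alpha_i-\beta_i).$$ Suppose $\beta_i$ monotonically increases with $p_i$ (i.e. $\beta_i=h(p_i)$ for all $i\in\mathcal{A}$, for some monotonically increasing function $h$). Then, with all expectations, variances and covariances taken over $i$ drawn uniformly at random from $\mathcal{A}$, $$\operatorname{Var}[w_ip_i]-\operatorname{Var}[w_i]\,\mathbb{E}[p_i^2]\;\geq\;2\Big(\operatorname{Cov}[\alpha_i,\beta_i]\,\mathbb{E}[p_i^2]-\operatorname{Cov}[\alpha_ip_i,\beta_ip_i]\Big).$$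
   Context: Interpretation: for a fixed prompt $x$, $p_i=\pi_\theta(y_i\mid x)$ is the model probability of response $y_i$, and $r^*_i$ is the value of the optimal reward on $(x,y_i)$. The random index $i$ is uniform over the response set $\mathcal{A}$, so e.g. $\mathbb{E}[p_i^2]=\frac{1}{|\mathcal{A}|}\sum_{i\in\mathcal{A}}p_i^2$. *)

(* Defs.v *)
From HB Require Import structures.
From mathcomp Require Import all_boot all_order all_algebra.
From mathcomp Require Import reals.
From mathcomp Require Import sequences exp.
Set Implicit Arguments. Unset Strict Implicit. Unset Printing Implicit Defensive.
Import Order.TTheory GRing.Theory Num.Theory.
Local Open Scope ring_scope.

Definition unifE (R : realType) (A : finType) (f : A -> R) : R :=
  (\sum_(i : A) f i) / #|A|%:R.

Definition unifVar (R : realType) (A : finType) (f : A -> R) : R :=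
  unifE (fun i => (f i - unifE f) ^+ 2).

Definition unifCov (R : realType) (A : finType) (f g : A -> R) : R :=
  unifE (fun i => (f i - unifE f) * (g i - unifE g)).

Definition alpha (R : realType) (A : finType) (p : A -> R) (i : A) : R :=
  \sum_(j : A | j != i) p i / (p i + p j).

Definition beta (R : realType) (A : finType) (r : A -> R) (i : A) : R :=
  \sum_(j : A | j != i) expR (r i) / (expR (r i) + expR (r j)).

Definition wgap (R : realType) (A : finType) (p r : A -> R) (i : A) : R :=
  - (alpha p i - beta r i).

(* Main.v *)
Require Import Defs.
From HB Require Import structures.
From mathcomp Require Import all_boot all_order all_algebra.
From mathcomp Require Import reals.
From mathcomp Require Import sequences exp.
From mathcomp Require Import ring lra.
Import Order.TTheory GRing.Theory Num.Theory.
Local Open Scope ring_scope.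

Set Implicit Arguments.
Unset Strict Implicit.

Section Aux.
Variable R : realType.

Definition Tv (fi fj pi pj pk : R) : R :=
  fi^+2 * pi^+2 - (fi * pi) * (fj * pj) - fi^+2 * pj^+2 + (fi * fj) * pk^+2.

Definition Symv (f1 f2 f3 p1 p2 p3 : R) : R :=
  Tv f1 f2 p1 p2 p3 + Tv f1 f3 p1 p3 p2 + Tv f2 f1 p2 p1 p3 +
  Tv f2 f3 p2 p3 p1 + Tv f3 f1 p3 p1 p2 + Tv f3 f2 p3 p2 p1.

Lemma Symv_sorted f1 f2 f3 p1 p2 p3 :
  0 <= f1 -> f1 <= f2 -> f2 <= f3 -> 0 <= p1 -> p1 <= p2 -> p2 <= p3 ->
  0 <= Symv f1 f2 f3 p1 p2 p3.
Proof.
move=> h1 h2 h3 h4 h5 h6.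
set a := f1; set b := f2 - f1; set c := f3 - f2.
set x := p1; set y := p2 - p1; set z := p3 - p2.
have ha : 0 <= a by [].
have hb : 0 <= b by rewrite subr_ge0.
have hc : 0 <= c by rewrite subr_ge0.
have hx : 0 <= x by [].
have hy : 0 <= y by rewrite subr_ge0.
have hz : 0 <= z by rewrite subr_ge0.
have -> : Symv f1 f2 f3 p1 p2 p3 = 2%:R * (c * c * z * z) + 4%:R * (c * c * y * z) + 1%:R * (c * c * y * y) + 4%:R * (c * c * x * z) + 2%:R * (c * c * x * y) + 4%:R * (b * c * z * z) + 6%:R * (b * c * y * z) + 6%:R * (b * c * x * z) + 1%:R * (b * b * z * z) + 4%:R * (a * c * z * z) + 6%:R * (a * c * y * z) + 2%:R * (a * c * y * y) + 4%:R * (a * c * x * z) + 2%:R * (a * c * x * y) + 4%:R * (a * b * z * z) + 4%:R * (a * b * y * z) + 4%:R * (a * b * y * y) + 2%:R * (a * b * x * z) + 4%:R * (a * b * x * y) + 2%:R * (a * a * z * z) + 2%:R * (a * a * y * z) + 2%:R * (a * a * y * y).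
  rewrite /Symv /Tv /a /b /c /x /y /z; ring.
clearbody a b c x y z.
by repeat (apply: addr_ge0 || apply: mulr_ge0 || apply: ler0n).
Qed.

Lemma Sym213 f1 f2 f3 p1 p2 p3 : Symv f1 f2 f3 p1 p2 p3 = Symv f2 f1 f3 p2 p1 p3.
Proof. rewrite /Symv /Tv; ring. Qed.

Lemma Sym132 f1 f2 f3 p1 p2 p3 : Symv f1 f2 f3 p1 p2 p3 = Symv f1 f3 f2 p1 p3 p2.
Proof. rewrite /Symv /Tv; ring. Qed.

Lemma Sym231 f1 f2 f3 p1 p2 p3 : Symv f1 f2 f3 p1 p2 p3 = Symv f2 f3 f1 p2 p3 p1.
Proof. rewrite /Symv /Tv; ring. Qed.

Lemma Sym312 f1 f2 f3 p1 p2 p3 : Symv f1 f2 f3 p1 p2 p3 = Symv f3 f1 f2 p3 p1 p2.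
Proof. rewrite /Symv /Tv; ring. Qed.

Lemma Sym321 f1 f2 f3 p1 p2 p3 : Symv f1 f2 f3 p1 p2 p3 = Symv f3 f2 f1 p3 p2 p1.
Proof. rewrite /Symv /Tv; ring. Qed.

Lemma Symv_ge0 f1 f2 f3 p1 p2 p3 :
  0 <= f1 -> 0 <= f2 -> 0 <= f3 -> 0 <= p1 -> 0 <= p2 -> 0 <= p3 ->
  (p1 <= p2 -> f1 <= f2) -> (p2 <= p1 -> f2 <= f1) ->
  (p1 <= p3 -> f1 <= f3) -> (p3 <= p1 -> f3 <= f1) ->
  (p2 <= p3 -> f2 <= f3) -> (p3 <= p2 -> f3 <= f2) ->
  0 <= Symv f1 f2 f3 p1 p2 p3.
Proof.
move=> *.
case/orP: (le_total p1 p2) => h12; case/orP: (le_total p2 p3) => h23;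
case/orP: (le_total p1 p3) => h13.
all: solve [ by apply: Symv_sorted; auto
      | by rewrite Sym213; apply: Symv_sorted; auto
      | by rewrite Sym132; apply: Symv_sorted; auto
      | by rewrite Sym231; apply: Symv_sorted; auto
      | by rewrite Sym312; apply: Symv_sorted; auto
      | by rewrite Sym321; apply: Symv_sorted; auto ].
Qed.

End Aux.

Section Sums.
Variable R : realType.
Variable A : finType.
Local Notation N := (#|A|%:R : R).

Definition sum3 (F : A -> A -> A -> R) : R :=
  \sum_(i : A) \sum_(j : A) \sum_(k : A) F i j k.

Lemma sumc (c : R) : \sum_(k : A) c = c * N.
Proof. by rewrite sumr_const mulr_natr. Qed.

Lemma sum3D F G : sum3 (fun i j k => F i j k + G i j k) = sum3 F + sum3 G.
Proof.
rewrite /sum3 -big_split; apply: eq_bigr => i _.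
rewrite -big_split; apply: eq_bigr => j _; by rewrite -big_split.
Qed.

Lemma sum3B F G : sum3 (fun i j k => F i j k - G i j k) = sum3 F - sum3 G.
Proof.
rewrite /sum3 -sumrB; apply: eq_bigr => i _.
rewrite -sumrB; apply: eq_bigr => j _; by rewrite -sumrB.
Qed.

Lemma sum3_12 F : sum3 (fun i j k => F j i k) = sum3 F.
Proof. by rewrite /sum3 exchange_big. Qed.

Lemma sum3_23 F : sum3 (fun i j k => F i k j) = sum3 F.
Proof. rewrite /sum3; apply: eq_bigr => i _; exact: exchange_big. Qed.

Lemma sum3_sym F :
  sum3 (fun i j k => F i j k + F i k j + F j i k + F j k i + F k i j + F k j i)
  = 6%:R * sum3 F.
Proof.
rewrite !sum3D.
rewrite (sum3_23 F).
rewrite (sum3_12 F).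
rewrite (sum3_12 (fun i j k => F i k j)) (sum3_23 F).
rewrite (sum3_23 (fun i j k => F j i k)) (sum3_12 F).
rewrite (sum3_23 (fun i j k => F j k i)).
rewrite (sum3_12 (fun i j k => F i k j)) (sum3_23 F).
ring.
Qed.

Lemma s3_1 (a : A -> R) : sum3 (fun i j k => a i) = N ^+ 2 * \sum_i a i.
Proof.
rewrite /sum3 mulr_sumr; apply: eq_bigr => i _.
under eq_bigr do rewrite sumc.
rewrite sumc; ring.
Qed.

Lemma s3_2 (a b : A -> R) : sum3 (fun i j k => a i * b j) = N * ((\sum_i a i) * \sum_j b j).
Proof.
rewrite /sum3 mulr_suml mulr_sumr; apply: eq_bigr => i _.
under eq_bigr do rewrite sumc.
rewrite -mulr_suml -mulr_sumr. ring.
Qed.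

Lemma s3_3 (a b c : A -> R) :
  sum3 (fun i j k => a i * b j * c k) = (\sum_i a i) * (\sum_j b j) * \sum_k c k.
Proof.
rewrite -mulrA mulr_suml /sum3; apply: eq_bigr => i _.
rewrite mulr_suml mulr_sumr; apply: eq_bigr => j _.
by rewrite mulrA mulr_sumr.
Qed.

End Sums.

Section Key.
Variable R : realType.
Variable A : finType.
Local Notation N := (#|A|%:R : R).

Lemma varE (g : A -> R) : (0 < #|A|)%N ->
  unifVar g = (N * \sum_i g i ^+ 2 - (\sum_i g i) ^+ 2) / N ^+ 2.
Proof.
move=> hA; have hN : N != 0 by rewrite pnatr_eq0 -lt0n.
rewrite /unifVar /unifE; set m := (\sum_i g i) / N.
transitivity ((\sum_i (g i ^+ 2 - (2%:R * m) * g i + m ^+ 2)) / N).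
  by congr (_ / _); apply: eq_bigr => i _; ring.
rewrite big_split /= sumrB -mulr_sumr sumc /m.
field; exact: hN.
Qed.

Lemma EE (g : A -> R) : unifE g = (\sum_i g i) / N.
Proof. by []. Qed.

Lemma keyG (f p : A -> R) : (0 < #|A|)%N -> (forall i, 0 <= f i) -> (forall i, 0 <= p i) ->
  (forall i j, p i <= p j -> f i <= f j) ->
  0 <= unifVar (fun i => f i * p i) - unifVar f * unifE (fun i => p i ^+ 2).
Proof.
move=> hA hf hp hm; have hN : N != 0 by rewrite pnatr_eq0 -lt0n.
have hN0 : 0 < N by rewrite ltr0n.
pose F := fun i j k => Tv (f i) (f j) (p i) (p j) (p k).
have hS : 0 <= sum3 (fun i j k => Symv (f i) (f j) (f k) (p i) (p j) (p k)).
  rewrite /sum3; apply: sumr_ge0 => i _; apply: sumr_ge0 => j _; apply: sumr_ge0 => k _.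
  by apply: Symv_ge0; auto.
have hS2 : sum3 (fun i j k => Symv (f i) (f j) (f k) (p i) (p j) (p k)) = 6%:R * sum3 F
  := sum3_sym F.
have hF : sum3 F = N ^+ 2 * \sum_i (f i ^+ 2 * p i ^+ 2)
   - N * ((\sum_i (f i * p i)) * \sum_j (f j * p j))
   - N * ((\sum_i f i ^+ 2) * \sum_j p j ^+ 2)
   + (\sum_i f i) * (\sum_j f j) * \sum_k p k ^+ 2.
  rewrite /F /Tv sum3D !sum3B s3_1 !s3_2 s3_3 //.
rewrite hS2 hF in hS.
rewrite !varE // EE.
have -> : \sum_i (f i * p i) ^+ 2 = \sum_i (f i ^+ 2 * p i ^+ 2).
  by apply: eq_bigr => i _; rewrite exprMn.
set S1 := \sum_i (f i ^+ 2 * p i ^+ 2).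
set S2 := \sum_i (f i * p i).
set S3 := \sum_i f i ^+ 2.
set S4 := \sum_i p i ^+ 2.
set S5 := \sum_i f i.
have -> : (N * S1 - S2 ^+ 2) / N ^+ 2 - (N * S3 - S5 ^+ 2) / N ^+ 2 * (S4 / N)
  = (N ^+ 2 * S1 - N * (S2 * S2) - N * (S3 * S4) + S5 * S5 * S4) / N ^+ 3.
  by field.
apply: divr_ge0; last by apply: exprn_ge0; apply: ltW.
have h6 : (0 : R) < 6%:R by rewrite ltr0n.
rewrite -(pmulr_rge0 _ h6); exact: hS.
Qed.

End Key.

Section Main.
Variable R : realType.
Variable A : finType.
Local Notation N := (#|A|%:R : R).

Lemma covE (f g : A -> R) : (0 < #|A|)%N ->
  unifCov f g = (N * \sum_i (f i * g i) - (\sum_i f i) * (\sum_i g i)) / N ^+ 2.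
Proof.
move=> hA; have hN : N != 0 by rewrite pnatr_eq0 -lt0n.
rewrite /unifCov /unifE; set m1 := (\sum_i f i) / N; set m2 := (\sum_i g i) / N.
transitivity ((\sum_i (f i * g i - m2 * f i - m1 * g i + m1 * m2)) / N).
  by congr (_ / _); apply: eq_bigr => i _; ring.
rewrite big_split /= !sumrB -!mulr_sumr sumc /m1 /m2; field; exact: hN.
Qed.

Lemma covC (f g : A -> R) : unifCov f g = unifCov g f.
Proof. rewrite /unifCov /unifE; congr (_ / _); apply: eq_bigr => i _; exact: mulrC. Qed.

Lemma var_ext (f g : A -> R) : (forall i, f i = g i) -> unifVar f = unifVar g.
Proof.
move=> e; rewrite /unifVar /unifE.
have -> : \sum_i f i = \sum_i g i by apply: eq_bigr => i _.
by congr (_ / _); apply: eq_bigr => i _; rewrite e.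
Qed.

Lemma VarB (f g : A -> R) : (0 < #|A|)%N ->
  unifVar (fun i => f i - g i) = unifVar f + unifVar g - 2%:R * unifCov f g.
Proof.
move=> hA; have hN : N != 0 by rewrite pnatr_eq0 -lt0n.
rewrite !varE // covE // sumrB.
have -> : \sum_i (f i - g i) ^+ 2 =
   \sum_i f i ^+ 2 + \sum_i g i ^+ 2 - 2%:R * \sum_i (f i * g i).
  rewrite mulr_sumr -big_split /= -sumrB; apply: eq_bigr => i _; ring.
field; exact: hN.
Qed.

Lemma frac_mono (x y q : R) : 0 < x -> x <= y -> 0 < q -> x / (x + q) <= y / (y + q).
Proof.
move=> hx hxy hq.
have hy : 0 < y by apply: lt_le_trans hxy.
rewrite ler_pdivrMr ?addr_gt0 // mulrAC ler_pdivlMr ?addr_gt0 //.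
nra.
Qed.

Lemma alphaE (p : A -> R) i : 0 < p i ->
  alpha p i = \sum_j p i / (p i + p j) - 2%:R^-1.
Proof.
move=> hp; rewrite (bigD1 i) //= /alpha.
have -> : p i / (p i + p i) = 2%:R^-1.
  have hp2 : p i + p i != 0 by rewrite gt_eqF // addr_gt0.
  by field.
by rewrite addrAC subrr add0r.
Qed.

End Main.

Theorem theorem4p11 (R : realType) (A : finType) (p r : A -> R) (h : R -> R)
  (hA : (2 <= #|A|)%N)
  (hpos : forall i, 0 < p i)
  (hsum : \sum_(i : A) p i = 1)
  (hmono : forall x y : R, 0 < x -> x <= y -> h x <= h y)
  (hbeta : forall i, beta r i = h (p i)) :
  unifVar (fun i => wgap p r i * p i)
    - unifVar (wgap p r) * unifE (fun i => p i ^+ 2)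
  >= 2 * (unifCov (alpha p) (beta r) * unifE (fun i => p i ^+ 2)
          - unifCov (fun i => alpha p i * p i) (fun i => beta r i * p i)).
Proof.
have hA0 : (0 < #|A|)%N by exact: ltnW.
have hp0 : forall i, 0 <= p i by move=> i; exact: ltW.
have Ga : 0 <= unifVar (fun i => alpha p i * p i) - unifVar (alpha p) * unifE (fun i => p i ^+ 2).
  apply: keyG => //.
  - move=> i; apply: sumr_ge0 => j _; apply: divr_ge0; first exact: hp0.
    by apply: addr_ge0.
  - move=> i j hij; rewrite !alphaE //; rewrite lerD2r; apply: ler_sum => k _.
    exact: frac_mono.
have Gb : 0 <= unifVar (fun i => beta r i * p i) - unifVar (beta r) * unifE (fun i => p i ^+ 2).
  apply: keyG => //.
  - move=> i; apply: sumr_ge0 => j _; apply: divr_ge0; first exact: ltW (expR_gt0 _).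
    by apply: addr_ge0; apply: ltW; apply: expR_gt0.
  - by move=> i j hij; rewrite !hbeta; apply: hmono.
rewrite (@var_ext _ _ (fun i => wgap p r i * p i) (fun i => beta r i * p i - alpha p i * p i));
  last by move=> i; rewrite /wgap; ring.
rewrite (@var_ext _ _ (wgap p r) (fun i => beta r i - alpha p i));
  last by move=> i; rewrite /wgap; ring.
rewrite !VarB // (covC (fun i => beta r i * p i)) (covC (beta r)).
lra.
Qed.
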